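(* Let $\mathcal X$ and $\mathcal U$ be finite nonempty sets, $f:\mathcal X\times\mathcal U\to\mathcal X$, and $\ell,g:\mathcal X\to\mathbb R$. Define, for $x\in\mathcal X$, $$V_{\mathrm A}^*(x)=\max_{\pi\in\Pi}\min_{\tau\in\mathbb N} g(\xi_x^\pi(\tau)),\qquad \tilde\ell(x)=\min\{\ell(x),V_{\mathrm A}^*(x)\},$$ $$\tilde V_{\mathrm{RA}}^*(x)=\max_{\pi\in\Pi}\max_{\tau\in\mathbb N}\min\Big\{\tilde\ell(\xi_x^\pi(\tau)),\ \min_{\kappa\le\tau} g(\xi_x^\pi(\kappa))\Big\}.$$ Then for every $x\in\mathcal X$, $$\max_{\bar\pi\in\overline\Pi}\min\Big\{\max_{\tau\in\mathbb N}\ell(\bar\xi_x^{\bar\pi}(\tau)),\ \min_{\tau\in\mathbb N} g(\bar\xi_x^{\bar\pi}(\tau))\Big\}=\max_{\mathbf u\in\mathbb U}\min\Big\{\max_{\tau\in\mathbb N}\ell(\xi_x^{\mathbf u}(\tau)),\ \min_{\kappa\in\mathbb N} g(\xi_x^{\mathbf u}(\kappa))\Big\}=\tilde V_{\mathrm{RA}}^*(x).$$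
   Context: $\mathbb N=\{0,1,2,\dots\}$. $\Pi$ is the set of maps $\pi:\mathcal X\to\mathcal U$ and $\mathbb U$ the set of action sequences $\mathbf u:\mathbb N\to\mathcal U$. For $x\in\mathcal X$ and $\pi\in\Pi$, $\xi_x^\pi:\mathbb N\to\mathcal X$ is given by $\xi_x^\pi(0)=x$, $\xi_x^\pi(t+1)=f(\xi_x^\pi(t),\pi(\xi_x^\pi(t)))$; for $\mathbf u\in\mathbb U$, $\xi_x^{\mathbf u}(0)=x$, $\xi_x^{\mathbf u}(t+1)=f(\xi_x^{\mathbf u}(t),\mathbf u(t))$. Let $\mathcal Y=\{\ell(x):x\in\mathcal X\}$, $\mathcal Z=\{g(x):x\in\mathcal X\}$, and let $\overline\Pi$ be the set of augmented policies $\bar\pi:\mathcal X\times\mathcal Y\times\mathcal Z\to\mathcal U$. For $\bar\pi\in\overline\Pi$ and $x\in\mathcal X$, the augmented trajectory $(\bar\xi_x^{\bar\pi},\bar y_x^{\bar\pi},\bar z_x^{\bar\pi})$ is defined by $\bar\xi_x^{\bar\pi}(0)=x$, $\bar y_x^{\bar\pi}(0)=\ell(x)$, $\bar z_x^{\bar\pi}(0)=g(x)$ and $\bar\xi_x^{\bar\pi}(t+1)=f\big(\bar\xi_x^{\bar\pi}(t),\bar\pi(\bar\xi_x^{\bar\pi}(t),\bar y_x^{\bar\pi}(t),\bar z_x^{\bar\pi}(t))\big)$, $\bar y_x^{\bar\pi}(t+1)=\max\{\ell(\bar\xi_x^{\bar\pi}(t+1)),\bar y_x^{\bar\pi}(t)\}$,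 $\bar z_x^{\bar\pi}(t+1)=\min\{g(\bar\xi_x^{\bar\pi}(t+1)),\bar z_x^{\bar\pi}(t)\}$. *)

(* Defs.v *)
From mathcomp Require Import all_boot all_order all_algebra.
From mathcomp Require Import all_classical all_reals.
Set Implicit Arguments. Unset Strict Implicit. Unset Printing Implicit Defensive.
Import Order.TTheory GRing.Theory Num.Theory.
Local Open Scope ring_scope.
Local Open Scope classical_set_scope.

Section Defs.
Variables (R : realType) (X U : finType).
Variable f : X -> U -> X.
Variables (l g : X -> R).

Fixpoint traj_pi (pi : X -> U) (x : X) (t : nat) : X :=
  match t with 0 => x | t'.+1 => let s := traj_pi pi x t' in f s (pi s) end.

Fixpoint traj_u (u : nat -> U) (x : X) (t : nat) : X :=
  match t with 0 => x | t'.+1 => let s := traj_u u x t' in f s (u t') end.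

Definition Yset := {y : R | exists x : X, l x = y}.
Definition Zset := {z : R | exists x : X, g x = z}.

Lemma max_in_range (h : X -> R) (a b : R) :
  (exists x, h x = a) -> (exists x, h x = b) -> exists x, h x = Num.max a b.
Proof.
move=> [xa ha] [xb hb]; rewrite /Num.max; case: ifP => _.
  by exists xb. by exists xa.
Qed.

Lemma min_in_range (h : X -> R) (a b : R) :
  (exists x, h x = a) -> (exists x, h x = b) -> exists x, h x = Num.min a b.
Proof.
move=> [xa ha] [xb hb]; rewrite /Num.min; case: ifP => _.
  by exists xa. by exists xb.
Qed.

Definition aug_policy := X -> Yset -> Zset -> U.

Definition aug_init (x : X) : X * Yset * Zset :=
  (x, exist _ (l x) (ex_intro _ x erefl), exist _ (g x) (ex_intro _ x erefl)).

Definition aug_step (bpi : aug_policy) (s : X * Yset * Zset) : X * Yset * Zset :=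
  let: (xi, y, z) := s in
  let x' := f xi (bpi xi y z) in
  (x',
   exist _ (Num.max (l x') (sval y))
     (max_in_range (ex_intro _ x' erefl) (svalP y)),
   exist _ (Num.min (g x') (sval z))
     (min_in_range (ex_intro _ x' erefl) (svalP z))).

Fixpoint aug_traj (bpi : aug_policy) (x : X) (t : nat) : X * Yset * Zset :=
  match t with 0 => aug_init x | t'.+1 => aug_step bpi (aug_traj bpi x t') end.

Definition aug_xi (bpi : aug_policy) (x : X) (t : nat) : X := (aug_traj bpi x t).1.1.

(* "max"/"min" over (possibly infinite) index sets, as the library sup/inf;
   all these sets take finitely many values, so sup/inf are attained. *)

Definition VA (x : X) : R :=
  sup (range (fun pi : X -> U => inf (range (fun t : nat => g (traj_pi pi x t))))).

Definition ltilde (x : X) : R := Num.min (l x) (VA x).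

Definition VRA_tilde (x : X) : R :=
  sup (range (fun pi : X -> U =>
    sup (range (fun tau : nat =>
      Num.min (ltilde (traj_pi pi x tau))
              (inf [set g (traj_pi pi x k) | k in [set k : nat | (k <= tau)%N]]))))).

Definition V_aug (x : X) : R :=
  sup (range (fun bpi : aug_policy =>
    Num.min (sup (range (fun t : nat => l (aug_xi bpi x t))))
            (inf (range (fun t : nat => g (aug_xi bpi x t)))))).

Definition V_openloop (x : X) : R :=
  sup (range (fun u : nat -> U =>
    Num.min (sup (range (fun t : nat => l (traj_u u x t))))
            (inf (range (fun k : nat => g (traj_u u x k)))))).

End Defs.

(* Main.v *)
Require Import Defs.
From mathcomp Require Import all_boot all_order all_algebra.
From mathcomp Require Import all_classical all_reals.

Module Helpers.
Set Implicit Arguments. Unset Strict Implicit. Unset Printing Implicit Defensive.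
Import Order.TTheory GRing.Theory Num.Theory.
Local Open Scope ring_scope.
Local Open Scope classical_set_scope.

Section Helpers.
Variable R : realType.

Lemma hsup_ge_elt (A : set R) (M a : R) :
  (forall b, A b -> b <= M) -> A a -> a <= sup A.
Proof. by move=> hM Aa; apply: ub_le_sup => //; exists M. Qed.

Lemma hinf_le_elt (A : set R) (M a : R) :
  (forall b, A b -> M <= b) -> A a -> inf A <= a.
Proof. by move=> hM Aa; apply: ge_inf => //; exists M. Qed.

Lemma hsup_le_ub (A : set R) (M a : R) :
  A a -> (forall b, A b -> b <= M) -> sup A <= M.
Proof. by move=> Aa hM; apply: ge_sup => //; exists a. Qed.

Lemma hinf_ge_lb (A : set R) (M a : R) :
  A a -> (forall b, A b -> M <= b) -> M <= inf A.
Proof. by move=> Aa hM; apply: lb_le_inf => //; exists a. Qed.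

Lemma ex_min_nat (P : nat -> Prop) : (exists n, P n) ->
  exists n, P n /\ forall m, P m -> (n <= m)%N.
Proof.
move=> [n Pn].
have H : exists n, (fun n => `[< P n >]) n by exists n; apply/asboolP.
case: (ex_minnP H) => m /asboolP Pm Hm; exists m; split => // k Pk.
by apply: Hm; apply/asboolP.
Qed.

Variable X : finType.

Lemma argmax_in (h : X -> R) (P : pred X) (x0 : X) : P x0 ->
  exists2 xm, P xm & forall y, P y -> h y <= h xm.
Proof.
move=> Px0; case: (arg_maxP h Px0) => xm Pxm H; exists xm => //.
Qed.

Lemma traj_max (h : X -> R) (s : nat -> X) :
  exists n, forall m, h (s m) <= h (s n).
Proof.
pose P := fun y => `[< exists n, s n = y >].
have P0 : P (s 0%N) by apply/asboolP; exists 0%N.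
case: (argmax_in h P0) => xm /asboolP [n <-] H; exists n => m.
by apply: H; apply/asboolP; exists m.
Qed.

Lemma sup_traj (h : X -> R) (s : nat -> X) :
  (exists n, sup (range (fun t => h (s t))) = h (s n)) /\
  forall m, h (s m) <= sup (range (fun t => h (s t))).
Proof.
case: (traj_max h s) => n Hn.
have ub : forall b, range (fun t => h (s t)) b -> b <= h (s n).
  by move=> _ [t _ <-].
split; last by move=> m; apply: (hsup_ge_elt ub); exact: imageT.
exists n; apply/le_anti/andP; split.
  by apply: (hsup_le_ub (imageT _ 0%N)).
by apply: (hsup_ge_elt ub); exact: imageT.
Qed.

Lemma inf_traj (h : X -> R) (s : nat -> X) :
  (exists n, inf (range (fun t => h (s t))) = h (s n)) /\
  forall m, inf (range (fun t => h (s t))) <= h (s m).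
Proof.
case: (traj_max (fun y => - h y) s) => n Hn.
have lb : forall b, range (fun t => h (s t)) b -> h (s n) <= b.
  by move=> _ [t _ <-]; rewrite -lerN2.
split; last by move=> m; apply: (hinf_le_elt lb); exact: imageT.
exists n; apply/le_anti/andP; split.
  by apply: (hinf_le_elt lb); exact: imageT.
by apply: (hinf_ge_lb (imageT _ 0%N)).
Qed.

Lemma J_ge (l g : X -> R) (s : nat -> X) (c : R) :
  c <= Num.min (sup (range (fun t => l (s t)))) (inf (range (fun t => g (s t))))
  <-> (exists n, c <= l (s n)) /\ (forall k, c <= g (s k)).
Proof.
case: (sup_traj l s) => [[n Hn] Hs]; case: (inf_traj g s) => [[m Hm] Hi].
rewrite le_min Hn Hm; split.
  move=> /andP[h1 h2]; split; first by exists n.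
  by move=> k; apply: (le_trans h2); rewrite -Hm.
move=> [[n' Hn'] Hk]; apply/andP; split => //.
by apply: (le_trans Hn'); rewrite -Hn.
Qed.

End Helpers.

Section Traj.
Variables (X U : finType) (f : X -> U -> X).

Lemma traj_u_shift u y k :
  traj_u f u y k.+1 = traj_u f (fun i => u i.+1) (f y (u 0%N)) k.
Proof. by elim: k => [//|k IH] /=; rewrite -IH. Qed.

Lemma traj_pi_shift pi y k :
  traj_pi f pi y k.+1 = traj_pi f pi (f y (pi y)) k.
Proof. by elim: k => [//|k IH] /=; rewrite -IH. Qed.

Variable R : realType.
Variables (l g : X -> R) (c : R) (u0 : U).

Definition Safe y := exists u, forall k, c <= g (traj_u f u y k).
Definition RAn n y := exists u, c <= l (traj_u f u y n) /\ forall k, c <= g (traj_u f u y k).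
Definition RA y := exists n, RAn n y.

Lemma RA_Safe y : RA y -> Safe y.
Proof. by move=> [n [u [_ H]]]; exists u. Qed.

Lemma Safe_g y : Safe y -> c <= g y.
Proof. by move=> [u H]; exact: (H 0%N). Qed.

Lemma pi_safe_ex : exists pi : X -> U, forall y, Safe y -> Safe (f y (pi y)).
Proof.
have H : forall y, exists a, Safe y -> Safe (f y a).
  move=> y; case: (pselect (Safe y)) => [[u Hu]|nS]; last by exists u0.
  exists (u 0%N) => _; exists (fun i => u i.+1) => k.
  by rewrite -traj_u_shift.
by case: (choice H) => pi Hpi; exists pi.
Qed.

Lemma safe_traj pi : (forall y, Safe y -> Safe (f y (pi y))) ->
  forall y, Safe y -> forall k, Safe (traj_pi f pi y k).
Proof. by move=> Hpi y Sy; elim=> [//|k IH] /=; apply: Hpi. Qed.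

Lemma d_ex : exists d : X -> nat, forall y, RA y -> RAn (d y) y /\ forall m, RAn m y -> (d y <= m)%N.
Proof.
have H : forall y, exists n, RA y -> RAn n y /\ forall m, RAn m y -> (n <= m)%N.
  move=> y; case: (pselect (RA y)) => [Ry|nR]; last by exists 0%N.
  by case: (ex_min_nat Ry) => n Hn; exists n.
by case: (choice H) => d Hd; exists d.
Qed.

Lemma pi_ra_ex : exists (pi : X -> U) (d : X -> nat), forall y, RA y -> 
  (c <= l y) \/ (RA (f y (pi y)) /\ (d (f y (pi y)) < d y)%N).
Proof.
case: d_ex => d Hd.
have H : forall y, exists a, RA y -> (c <= l y) \/ (RA (f y a) /\ (d (f y a) < d y)%N).
  move=> y; case: (pselect (RA y)) => [Ry|nR]; last by exists u0.
  case: (Hd y Ry) => [[u [Hl Hg]] Hmin].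
  case E: (d y) Hl => [|n] Hl; first by exists u0 => _; left.
  exists (u 0%N) => _; right.
  have Rn : RAn n (f y (u 0%N)).
    exists (fun i => u i.+1); split; first by rewrite -traj_u_shift.
    by move=> k; rewrite -traj_u_shift.
  split; first by exists n.
  by case: (Hd _ (ex_intro _ n Rn)) => _ /(_ _ Rn); rewrite ltnS.
case: (choice H) => pi Hpi; exists pi, d => y Ry; exact: Hpi.
Qed.

Lemma ra_reach (pi : X -> U) (d : X -> nat) :
  (forall y, RA y -> (c <= l y) \/ (RA (f y (pi y)) /\ (d (f y (pi y)) < d y)%N)) ->
  forall n y, (d y <= n)%N -> RA y ->
  exists tau, c <= l (traj_pi f pi y tau) /\ forall k, (k <= tau)%N -> RA (traj_pi f pi y k).
Proof.
move=> Hpi; elim=> [|n IH] y dy Ry.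
  case: (Hpi y Ry) => [Hl|[_ Hlt]]; last by move: (leq_trans Hlt dy).
  by exists 0%N; split => // k; rewrite leqn0 => /eqP ->.
case: (Hpi y Ry) => [Hl|[Ry' Hlt]].
  by exists 0%N; split => // k; rewrite leqn0 => /eqP ->.
have dy' : (d (f y (pi y)) <= n)%N by rewrite -ltnS (leq_trans Hlt dy).
case: (IH _ dy' Ry') => tau [H1 H2].
exists tau.+1; split; first by rewrite traj_pi_shift.
by case=> [//|k] Hk; rewrite traj_pi_shift; apply: H2.
Qed.

End Traj.

Section Main.
Variables (R : realType) (X U : finType) (f : X -> U -> X) (l g : X -> R) (x : X) (u0 : U).

Lemma aug_xi_S (bpi : aug_policy U l g) t :
  aug_xi f bpi x t.+1 = f (aug_xi f bpi x t)
     (bpi (aug_xi f bpi x t) (aug_traj f bpi x t).1.2 (aug_traj f bpi x t).2).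
Proof. by rewrite /aug_xi /=; case: (aug_traj f bpi x t) => [[a b] e]. Qed.

Lemma aug_y_S (bpi : aug_policy U l g) t :
  sval (aug_traj f bpi x t.+1).1.2 = Num.max (l (aug_xi f bpi x t.+1)) (sval (aug_traj f bpi x t).1.2).
Proof. by rewrite /aug_xi /=; case: (aug_traj f bpi x t) => [[a b] e]. Qed.

Lemma aug_open (bpi : aug_policy U l g) : exists u, forall t, aug_xi f bpi x t = traj_u f u x t.
Proof.
exists (fun t => bpi (aug_xi f bpi x t) (aug_traj f bpi x t).1.2 (aug_traj f bpi x t).2).
by elim=> [//|t IH]; rewrite aug_xi_S /= -IH.
Qed.

Lemma gmax_ex : exists gM, forall y, g y <= gM.
Proof.
case: (@argmax_in R X g predT x isT) => xm _ H; exists (g xm) => y; exact: H.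
Qed.

Lemma gmin_ex : exists gm, forall y, gm <= g y.
Proof.
case: (@argmax_in R X (fun y => - g y) predT x isT) => xm _ H; exists (g xm) => y.
by rewrite -lerN2; exact: H.
Qed.

Lemma J_le (gM : R) (HM : forall y, g y <= gM) (s : nat -> X) :
  Num.min (sup (range (fun t => l (s t)))) (inf (range (fun t => g (s t)))) <= gM.
Proof.
rewrite ge_min; apply/orP; right.
case: (inf_traj g s) => _ H; exact: le_trans (H 0%N) (HM _).
Qed.

Lemma V_aug_le : V_aug f l g x <= V_openloop f l g x.
Proof.
case: gmax_ex => gM HM.
have ubO : forall b, range (fun u : nat -> U => Num.min (sup (range (fun t => l (traj_u f u x t))))
            (inf (range (fun k => g (traj_u f u x k))))) b -> b <= gM.
  by move=> _ [u _ <-]; apply: J_le.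
rewrite /V_aug; apply: (hsup_le_ub (imageT _ (fun _ _ _ => u0))).
move=> _ [bpi _ <-].
set c := Num.min _ _.
have /J_ge [[n Hn] Hk] : c <= c by [].
case: (aug_open bpi) => u Hu.
apply: le_trans (hsup_ge_elt ubO (imageT _ u)).
apply/J_ge; split; first by exists n; rewrite -Hu.
by move=> k; rewrite -Hu.
Qed.

Lemma V_open_le : V_openloop f l g x <= V_aug f l g x.
Proof.
case: gmax_ex => gM HM.
have ubA : forall b, range (fun bpi : aug_policy U l g =>
    Num.min (sup (range (fun t => l (aug_xi f bpi x t))))
            (inf (range (fun t => g (aug_xi f bpi x t))))) b -> b <= gM.
  by move=> _ [bpi _ <-]; apply: J_le.
rewrite /V_openloop; apply: (hsup_le_ub (imageT _ (fun _ => u0))).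
move=> _ [u _ <-].
set c := Num.min _ _.
have /J_ge [[n Hn] Hk] : c <= c by [].
have RAx : RA f l g c x by exists n, u.
case: (pi_safe_ex f g c u0) => pis Hpis.
case: (pi_ra_ex f l g c u0) => pir [d Hpir].
pose bpi : aug_policy U l g := fun y yy zz => if c <= sval yy then pis y else pir y.
apply: le_trans (hsup_ge_elt ubA (imageT _ bpi)).
pose xi t := aug_xi f bpi x t.
pose Y t := sval (aug_traj f bpi x t).1.2.
have xiS : forall t, xi t.+1 = f (xi t) (if c <= Y t then pis (xi t) else pir (xi t)).
  by move=> t; rewrite /xi aug_xi_S.
have YS : forall t, Y t.+1 = Num.max (l (xi t.+1)) (Y t).
  by move=> t; rewrite /Y aug_y_S.
have lY : forall t, l (xi t) <= Y t.
  by case=> [//|t]; rewrite YS le_max lexx.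
have Inv : forall t, (Y t < c -> RA f l g c (xi t)) /\ (c <= Y t -> Safe f g c (xi t)).
  elim=> [|t [IH1 IH2]].
    by split => _; [exact: RAx | apply: RA_Safe; exact: RAx].
  rewrite xiS; case: (leP c (Y t)) => HY.
    split; last by move=> _; apply: Hpis; apply: IH2.
    rewrite YS gt_max => /andP[_ H]; by move: (le_lt_trans HY H); rewrite ltxx.
  have Rxi := IH1 HY.
  case: (Hpir _ Rxi) => [Hl|[R' _]].
    by move: (lt_le_trans HY Hl); rewrite ltNge (lY t).
  by split => _; [exact: R' | apply: RA_Safe; exact: R'].
have Hg : forall t, c <= g (xi t).
  move=> t; case: (Inv t) => [I1 I2]; case: (ltP (Y t) c) => HY.
    by apply: Safe_g; apply: RA_Safe; apply: I1.
  by apply: Safe_g; apply: I2.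
apply/J_ge; split => //.
case: (pselect (exists t, c <= l (xi t))) => // nE; exfalso.
have Hlt : forall t, l (xi t) < c.
  by move=> t; rewrite ltNge; apply/negP => H; apply: nE; exists t.
have HYc : forall t, Y t < c.
  by elim=> [|t IH]; [exact: (Hlt 0%N) | rewrite YS gt_max Hlt IH].
have Hd : forall t, RA f l g c (xi t) /\ (d (xi t) + t <= d x)%N.
  elim=> [|t [IH1 IH2]]; first by split; [exact: RAx | rewrite addn0].
  case: (Hpir _ IH1) => [Hl|[R' Hdl]].
    by move: (Hlt t); rewrite ltNge Hl.
  have HF : (c <= Y t) = false by rewrite leNgt HYc.
  rewrite xiS HF; split => //.
  by rewrite addnS; apply: leq_trans IH2; rewrite ltn_add2r.
case: (Hd (d x).+1) => _; rewrite addnS ltnNge => /negP; apply; exact: leq_addl.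
Qed.

End Main.

Section Main2.
Variables (R : realType) (X U : finType) (f : X -> U -> X) (l g : X -> R) (x : X) (u0 : U).

Lemma V_open_le_RA : V_openloop f l g x <= VRA_tilde f l g x.
Proof.
case: (gmax_ex g x) => gM HM; case: (gmin_ex g x) => gm Hm.
have ubVA : forall y, forall b, range (fun pi : X -> U => inf (range (fun t => g (traj_pi f pi y t)))) b -> b <= gM.
  move=> y _ [pi _ <-].
  apply: le_trans (HM (traj_pi f pi y 0%N)).
  by apply: (hinf_le_elt (M := gm)); [move=> _ [k _ <-] | exact: imageT].
have ubIn : forall pi, forall b, range (fun tau : nat =>
      Num.min (ltilde f l g (traj_pi f pi x tau))
              (inf [set g (traj_pi f pi x k) | k in [set k : nat | (k <= tau)%N]])) b -> b <= gM.
  move=> pi _ [tau _ <-].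
  rewrite ge_min; apply/orP; right.
  apply: le_trans (HM (traj_pi f pi x 0%N)).
  apply: (hinf_le_elt (M := gm)); first by move=> _ [k _ <-].
  by exists 0%N.
have ubOut : forall b, range (fun pi : X -> U => sup (range (fun tau : nat =>
      Num.min (ltilde f l g (traj_pi f pi x tau))
              (inf [set g (traj_pi f pi x k) | k in [set k : nat | (k <= tau)%N]])))) b -> b <= gM.
  move=> _ [pi _ <-]; apply: (hsup_le_ub (imageT _ 0%N)); exact: ubIn.
rewrite /V_openloop; apply: (hsup_le_ub (imageT _ (fun _ => u0))) => _ [u _ <-].
set c := Num.min _ _.
have /J_ge [[n Hn] Hk] : c <= c by [].
have RAx : RA f l g c x by exists n, u.
case: (pi_safe_ex f g c u0) => pis Hpis.
case: (pi_ra_ex f l g c u0) => pir [d Hpir].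
case: (ra_reach Hpir (leqnn (d x)) RAx) => tau [Hl HRA].
rewrite /VRA_tilde.
apply: le_trans (hsup_ge_elt ubOut (imageT _ pir)).
apply: le_trans (hsup_ge_elt (ubIn pir) (imageT _ tau)).
rewrite /ltilde !le_min Hl /=; apply/andP; split.
  rewrite /VA; apply: le_trans (hsup_ge_elt (ubVA _) (imageT _ pis)).
  apply: (hinf_ge_lb (imageT _ 0%N)) => _ [k _ <-].
  apply: Safe_g; apply: (safe_traj Hpis); apply: RA_Safe; exact: HRA.
apply: (hinf_ge_lb (a := g (traj_pi f pir x 0%N))); first by exists 0%N.
move=> _ [k hk <-]; apply: Safe_g; apply: RA_Safe; exact: HRA.
Qed.

Lemma RA_le_V_open : VRA_tilde f l g x <= V_openloop f l g x.
Proof.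
case: (gmax_ex g x) => gM HM; case: (gmin_ex g x) => gm Hm.
rewrite /VRA_tilde; apply: (hsup_le_ub (imageT _ (fun _ => u0))) => _ [pi _ <-].
apply: (hsup_le_ub (imageT _ 0%N)) => _ [tau _ <-].
set y := traj_pi f pi x tau.
set cc := inf _.
set M := V_openloop f l g x.
rewrite /ltilde /VA.
set b := fun pi' : X -> U => inf (range (fun t => g (traj_pi f pi' y t))).
have key : forall pi', Num.min (Num.min (l y) (b pi')) cc <= M.
  move=> pi'.
  pose u := fun k => if (k < tau)%N then pi (traj_pi f pi x k) else pi' (traj_pi f pi' y (k - tau)).
  have H1 : forall k, (k <= tau)%N -> traj_u f u x k = traj_pi f pi x k.
    elim=> [//|k IH] Hk /=; rewrite IH ?(ltnW Hk) // /u Hk //.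
  have H2 : forall j, traj_u f u x (tau + j) = traj_pi f pi' y j.
    elim=> [|j IH]; first by rewrite addn0 H1.
    rewrite addnS /= IH /u ltnNge leq_addr /= addKn //.
  set v := Num.min _ _.
  have lbcc : forall k, (k <= tau)%N -> cc <= g (traj_pi f pi x k).
    move=> k hk; apply: (hinf_le_elt (M := gm)); first by move=> _ [j _ <-].
    by exists k.
  have lbb : forall j, b pi' <= g (traj_pi f pi' y j).
    move=> j; apply: (hinf_le_elt (M := gm)); first by move=> _ [i _ <-].
    exact: imageT.
  apply: (@le_trans _ _ (Num.min (sup (range (fun t => l (traj_u f u x t))))
            (inf (range (fun k => g (traj_u f u x k)))))).
    apply/J_ge; split.
      exists tau; rewrite H1 // /v !ge_min lexx //.
    move=> k; case: (leqP k tau) => hk.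
      rewrite H1 //; apply: le_trans (lbcc k hk).
      by rewrite /v !ge_min lexx ?orbT.
    rewrite -(subnKC (ltnW hk)) H2; apply: le_trans (lbb _).
    by rewrite /v !ge_min lexx ?orbT.
  rewrite /M /V_openloop.
  apply: (hsup_ge_elt (M := gM)); last exact: imageT.
  by move=> _ [u' _ <-]; apply: J_le.
rewrite !ge_min.
case: (leP (l y) M) => //= hl; case: (leP cc M) => hc; rewrite ?orbT //= orbF.
apply: (hsup_le_ub (imageT _ (fun _ => u0))) => _ [pi' _ <-].
rewrite leNgt; apply/negP => hb.
have := key pi'; rewrite leNgt; move/negP; apply.
by rewrite !lt_min hl hb hc.
Qed.
End Main2.
End Helpers.
Import Helpers.
Import Order.TTheory GRing.Theory Num.Theory.
Local Open Scope ring_scope.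

Theorem theorem1 (R : realType) (X U : finType)
  (hX : (0 < #|X|)%N) (hU : (0 < #|U|)%N)
  (f : X -> U -> X) (l g : X -> R) (x : X) :
  V_aug f l g x = V_openloop f l g x /\ V_openloop f l g x = VRA_tilde f l g x.
Proof.
case/card_gt0P: hU => u0 _.
split; apply/le_anti/andP; split.
- exact: V_aug_le u0.
- exact: V_open_le u0.
- exact: V_open_le_RA u0.
- exact: RA_le_V_open u0.
Qed.
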